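(* Let $A$ be a braided group in $\mathcal C$, $B$ a braided group in $\mathcal{YD}(\mathcal C)^A_A$, and $C$ a braided group in $\mathcal{YD}(\mathcal C)^{A\rtimes B}_{A\rtimes B}$, which is identified (as a braided category) with $\mathcal{YD}(\mathcal{YD}(\mathcal C)^A_A)^B_B$ via the action $\mu^B_r\circ(\mu^A_r\otimes B)$ and coaction $(\Delta^A_r\otimes B)\circ\Delta^B_r$. Then the braided groups $(A\rtimes B)\rtimes C$ and $A\rtimes(B\rtimes C)$ in $\mathcal C$, both with underlying object $A\otimes B\otimes C$, coincide.
   Context: $\mathcal C$ is a braided monoidal category, assumed strict, with tensor product $\otimes$ and braiding $\Psi$. A braided group in a braided category $(\mathcal D,\Phi)$ is a bialgebra $(A,\mu,\eta,\Delta,\epsilon)$ (with $\Delta\circ\mu=(\mu\otimes\mu)\circ(A\otimes\Phi_{A,A}\otimes A)\circ(\Delta\otimes\Delta)$ and unit/counit compatibilities) with antipode. For a bialgebra $A$ in $(\mathcal D,\Phi)$, $\mathcal{YD}(\mathcal D)^A_A$ is the braided category of right crossed modules: right modules $\mu_r$ and comodules $\Delta_r$ with $(X\otimes\mu)\circ(\Phi_{A,X}\otimes A)\circ(A\otimes(\Delta_r\circ\mu_r))\circ(\Phi_{X,A}\otimes A)\circ(X\otimes\Delta)=(\mu_r\otimes\mu)\circ(X\otimes\Phi_{A,A}\otimes A)\circ(\Delta_r\otimes\Delta)$, with tensor product action $(\mu^X_r\otimes\mu^Y_r)\circ(X\otimes\Phi_{Y,A}\otimes A)\circ(X\otimes Y\otimes\Delta)$,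 coaction $(X\otimes Y\otimes\mu)\circ(X\otimes\Phi_{A,Y}\otimes A)\circ(\Delta^X_r\otimes\Delta^Y_r)$, and braiding $(Y\otimes\mu^X_r)\circ(\Phi_{X,Y}\otimes A)\circ(X\otimes\Delta^Y_r)$. For a braided group $A$ in $(\mathcal D,\Phi)$ and a braided group $B$ in $\mathcal{YD}(\mathcal D)^A_A$ (action $\mu^B_r$, coaction $\Delta^B_r$), the cross product $A\rtimes B$ is the braided group in $\mathcal D$ on $A\otimes B$ with multiplication $(\mu_A\otimes\mu_B)\circ(A\otimes A\otimes\mu^B_r\otimes B)\circ(A\otimes\Phi_{B,A}\otimes A\otimes B)\circ(A\otimes B\otimes\Delta_A\otimes B)$, unit $\eta_A\otimes\eta_B$, comultiplication $(A\otimes B\otimes\mu_A\otimes B)\circ(A\otimes\Phi_{A,B}\otimes A\otimes B)\circ(A\otimes A\otimes\Delta^B_r\otimes B)\circ(\Delta_A\otimes\Delta_B)$, counit $\epsilon_A\otimes\epsilon_B$. Here $B\rtimes C$ is formed in $\mathcal D=\mathcal{YD}(\mathcal C)^A_A$ and is a braided group there. *)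

(* Defs.v *)
(* Data.  Strictness is encoded by the (propositional) object equalities
   [tensA], [tens1l], [tens1r]; morphisms are transported along them with
   [cast] below. *)
Record bsmcat := BSMCat {
  Ob : Type;
  Hom : Ob -> Ob -> Type;
  idm : forall a, Hom a a;
  comp : forall a b c, Hom b c -> Hom a b -> Hom a c;
  tens : Ob -> Ob -> Ob;
  tunit : Ob;
  tm : forall a b c d, Hom a b -> Hom c d -> Hom (tens a c) (tens b d);
  braid : forall a b, Hom (tens a b) (tens b a);
  tensA : forall a b c, tens a (tens b c) = tens (tens a b) c;
  tens1l : forall a, tens tunit a = a;
  tens1r : forall a, tens a tunit = a
}.

Arguments Hom {_} _ _.
Arguments idm {_} _.
Arguments comp {_ _ _ _} _ _.
Arguments tens {_} _ _.
Arguments tunit {_}.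
Arguments tm {_ _ _ _ _} _ _.
Arguments braid {_} _ _.
Arguments tensA {_} _ _ _.
Arguments tens1l {_} _.
Arguments tens1r {_} _.

Declare Scope cat_scope.
Open Scope cat_scope.
Notation "g ∘ f" := (comp g f) (at level 40, left associativity) : cat_scope.
Notation "f ⊗ g" := (tm f g) (at level 35, right associativity) : cat_scope.
Notation "a ⊗ₒ b" := (tens a b) (at level 35, right associativity) : cat_scope.

Definition cast {C : bsmcat} {x y : Ob C} (e : x = y) : Hom x y :=
  match e in _ = z return Hom x z with eq_refl => idm x end.

Record is_bsmcat (C : bsmcat) : Prop := {
  compA : forall (a b c d : Ob C) (f : Hom a b) (g : Hom b c) (h : Hom c d),
      h ∘ (g ∘ f) = (h ∘ g) ∘ f;
  comp1l : forall (a b : Ob C) (f : Hom a b), idm b ∘ f = f;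
  comp1r : forall (a b : Ob C) (f : Hom a b), f ∘ idm a = f;
  tm_comp : forall (a b c a' b' c' : Ob C) (f : Hom a b) (g : Hom b c)
      (f' : Hom a' b') (g' : Hom b' c'), (g ∘ f) ⊗ (g' ∘ f') = (g ⊗ g') ∘ (f ⊗ f');
  tm_id : forall a b : Ob C, idm a ⊗ idm b = idm (a ⊗ₒ b);
  tmA : forall (a b c d e f : Ob C) (x : Hom a b) (y : Hom c d) (z : Hom e f),
      cast (tensA b d f) ∘ (x ⊗ (y ⊗ z)) = ((x ⊗ y) ⊗ z) ∘ cast (tensA a c e);
  tm1l : forall (a b : Ob C) (f : Hom a b),
      cast (tens1l b) ∘ (idm tunit ⊗ f) = f ∘ cast (tens1l a);
  tm1r : forall (a b : Ob C) (f : Hom a b),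
      cast (tens1r b) ∘ (f ⊗ idm tunit) = f ∘ cast (tens1r a);
  braid_nat : forall (a b c d : Ob C) (f : Hom a c) (g : Hom b d),
      braid c d ∘ (f ⊗ g) = (g ⊗ f) ∘ braid a b;
  braid_iso : forall a b : Ob C, exists g : Hom (b ⊗ₒ a) (a ⊗ₒ b),
      g ∘ braid a b = idm _ /\ braid a b ∘ g = idm _;
  hex1 : forall a b c : Ob C,
      braid a (b ⊗ₒ c) = cast (tensA b c a) ∘ (idm b ⊗ braid a c)
        ∘ cast (eq_sym (tensA b a c)) ∘ (braid a b ⊗ idm c) ∘ cast (tensA a b c);
  hex2 : forall a b c : Ob C,
      braid (a ⊗ₒ b) c = cast (eq_sym (tensA c a b)) ∘ (braid a c ⊗ idm b)
        ∘ cast (tensA a c b) ∘ (idm a ⊗ braid b c) ∘ cast (eq_sym (tensA a b c))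
}.

(* All rebracketings below are casts along object equalities; which proof of
   the equality is used is irrelevant (proof irrelevance), we let a tactic
   produce one. *)
Ltac oeq := rewrite ?tens1l, ?tens1r; rewrite ?tensA; reflexivity.
Notation "'κ'" := (cast _) : cat_scope.

(** * Braided groups (bialgebras with antipode) w.r.t. a given self-braiding
    [Phi] of the underlying object.  (Only [Phi_{X,X}] enters the axioms.) *)
Definition bgroup {C : bsmcat} (X : Ob C) (Phi : Hom (X ⊗ₒ X) (X ⊗ₒ X))
  (mu : Hom (X ⊗ₒ X) X) (eta : Hom tunit X) (De : Hom X (X ⊗ₒ X))
  (ep : Hom X tunit) (S : Hom X X) : Prop.
refine (
  mu ∘ (mu ⊗ idm X) ∘ κ = mu ∘ (idm X ⊗ mu) /\
  mu ∘ (eta ⊗ idm X) = cast (tens1l X) /\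
  mu ∘ (idm X ⊗ eta) = cast (tens1r X) /\
  κ ∘ (De ⊗ idm X) ∘ De = (idm X ⊗ De) ∘ De /\
  (ep ⊗ idm X) ∘ De = cast (eq_sym (tens1l X)) /\
  (idm X ⊗ ep) ∘ De = cast (eq_sym (tens1r X)) /\
  De ∘ mu = (mu ⊗ mu) ∘ κ ∘ (idm X ⊗ (Phi ⊗ idm X)) ∘ κ ∘ (De ⊗ De) /\
  ep ∘ mu = cast (tens1l tunit) ∘ (ep ⊗ ep) /\
  De ∘ eta = (eta ⊗ eta) ∘ cast (eq_sym (tens1l tunit)) /\
  ep ∘ eta = idm tunit /\
  mu ∘ (S ⊗ idm X) ∘ De = eta ∘ ep /\
  mu ∘ (idm X ⊗ S) ∘ De = eta ∘ ep).
all: oeq.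
Defined.

Definition is_rmod {C : bsmcat} (X H : Ob C) (muH : Hom (H ⊗ₒ H) H)
  (etaH : Hom tunit H) (rho : Hom (X ⊗ₒ H) X) : Prop.
refine (rho ∘ (rho ⊗ idm H) ∘ κ = rho ∘ (idm X ⊗ muH) /\
        rho ∘ (idm X ⊗ etaH) = cast (tens1r X)).
all: oeq.
Defined.

Definition is_rcomod {C : bsmcat} (X H : Ob C) (DeH : Hom H (H ⊗ₒ H))
  (epH : Hom H tunit) (delta : Hom X (X ⊗ₒ H)) : Prop.
refine (κ ∘ (delta ⊗ idm H) ∘ delta = (idm X ⊗ DeH) ∘ delta /\
        (idm X ⊗ epH) ∘ delta = cast (eq_sym (tens1r X))).
all: oeq.
Defined.

Definition ydcond {C : bsmcat} (X H : Ob C) (muH : Hom (H ⊗ₒ H) H)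
  (DeH : Hom H (H ⊗ₒ H)) (rho : Hom (X ⊗ₒ H) X) (delta : Hom X (X ⊗ₒ H))
  (PhiHX : Hom (H ⊗ₒ X) (X ⊗ₒ H)) (PhiXH : Hom (X ⊗ₒ H) (H ⊗ₒ X))
  (PhiHH : Hom (H ⊗ₒ H) (H ⊗ₒ H)) : Prop.
refine ((idm X ⊗ muH) ∘ κ ∘ (PhiHX ⊗ idm H) ∘ κ ∘ (idm H ⊗ (delta ∘ rho))
          ∘ κ ∘ (PhiXH ⊗ idm H) ∘ κ ∘ (idm X ⊗ DeH)
        = (rho ⊗ muH) ∘ κ ∘ (idm X ⊗ (PhiHH ⊗ idm H)) ∘ κ ∘ (delta ⊗ DeH)).
all: oeq.
Defined.

Definition is_yd {C : bsmcat} (X H : Ob C) (muH : Hom (H ⊗ₒ H) H)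
  (etaH : Hom tunit H) (DeH : Hom H (H ⊗ₒ H)) (epH : Hom H tunit)
  (PhiHX : Hom (H ⊗ₒ X) (X ⊗ₒ H)) (PhiXH : Hom (X ⊗ₒ H) (H ⊗ₒ X))
  (PhiHH : Hom (H ⊗ₒ H) (H ⊗ₒ H))
  (rho : Hom (X ⊗ₒ H) X) (delta : Hom X (X ⊗ₒ H)) : Prop :=
  is_rmod X H muH etaH rho /\ is_rcomod X H DeH epH delta /\
  ydcond X H muH DeH rho delta PhiHX PhiXH PhiHH.

Definition tens_act {C : bsmcat} (X Y H : Ob C) (DeH : Hom H (H ⊗ₒ H))
  (rhoX : Hom (X ⊗ₒ H) X) (rhoY : Hom (Y ⊗ₒ H) Y) (PhiYH : Hom (Y ⊗ₒ H) (H ⊗ₒ Y))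
  : Hom ((X ⊗ₒ Y) ⊗ₒ H) (X ⊗ₒ Y).
refine ((rhoX ⊗ rhoY) ∘ κ ∘ (idm X ⊗ (PhiYH ⊗ idm H)) ∘ κ
          ∘ (idm X ⊗ (idm Y ⊗ DeH)) ∘ κ).
all: oeq.
Defined.

Definition tens_coact {C : bsmcat} (X Y H : Ob C) (muH : Hom (H ⊗ₒ H) H)
  (deltaX : Hom X (X ⊗ₒ H)) (deltaY : Hom Y (Y ⊗ₒ H)) (PhiHY : Hom (H ⊗ₒ Y) (Y ⊗ₒ H))
  : Hom (X ⊗ₒ Y) ((X ⊗ₒ Y) ⊗ₒ H).
refine ((idm (X ⊗ₒ Y) ⊗ muH) ∘ κ ∘ (idm X ⊗ (PhiHY ⊗ idm H)) ∘ κ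
          ∘ (deltaX ⊗ deltaY)).
all: oeq.
Defined.

Definition yd_braid {C : bsmcat} (X Y H : Ob C) (rhoX : Hom (X ⊗ₒ H) X)
  (deltaY : Hom Y (Y ⊗ₒ H)) (PhiXY : Hom (X ⊗ₒ Y) (Y ⊗ₒ X)) : Hom (X ⊗ₒ Y) (Y ⊗ₒ X).
refine ((idm Y ⊗ rhoX) ∘ κ ∘ (PhiXY ⊗ idm H) ∘ κ ∘ (idm X ⊗ deltaY)).
all: oeq.
Defined.

Definition unit_act {C : bsmcat} (H : Ob C) (epH : Hom H tunit)
  : Hom (tunit ⊗ₒ H) tunit := epH ∘ cast (tens1l H).
Definition unit_coact {C : bsmcat} (H : Ob C) (etaH : Hom tunit H)
  : Hom tunit (tunit ⊗ₒ H) := cast (eq_sym (tens1l H)) ∘ etaH.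

Definition is_ydmor {C : bsmcat} (X Y H : Ob C) (rhoX : Hom (X ⊗ₒ H) X)
  (deltaX : Hom X (X ⊗ₒ H)) (rhoY : Hom (Y ⊗ₒ H) Y) (deltaY : Hom Y (Y ⊗ₒ H))
  (f : Hom X Y) : Prop :=
  rhoY ∘ (f ⊗ idm H) = f ∘ rhoX /\ deltaY ∘ f = (f ⊗ idm H) ∘ deltaX.

(* [X] (with action [rho], coaction [delta]) is a braided group in the braided
   category of right crossed modules over [H]; [PhiHX], [PhiXH], [PhiHH],
   [PhiXX] are the braidings of the ambient braided category. *)
Definition is_bg_yd {C : bsmcat} (X H : Ob C) (muH : Hom (H ⊗ₒ H) H)
  (etaH : Hom tunit H) (DeH : Hom H (H ⊗ₒ H)) (epH : Hom H tunit)
  (PhiHX : Hom (H ⊗ₒ X) (X ⊗ₒ H)) (PhiXH : Hom (X ⊗ₒ H) (H ⊗ₒ X))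
  (PhiHH : Hom (H ⊗ₒ H) (H ⊗ₒ H)) (PhiXX : Hom (X ⊗ₒ X) (X ⊗ₒ X))
  (rho : Hom (X ⊗ₒ H) X) (delta : Hom X (X ⊗ₒ H))
  (mu : Hom (X ⊗ₒ X) X) (eta : Hom tunit X) (De : Hom X (X ⊗ₒ X))
  (ep : Hom X tunit) (S : Hom X X) : Prop :=
  let rhoXX := tens_act X X H DeH rho rho PhiXH in
  let deltaXX := tens_coact X X H muH delta delta PhiHX in
  is_yd X H muH etaH DeH epH PhiHX PhiXH PhiHH rho delta /\
  is_ydmor (X ⊗ₒ X) X H rhoXX deltaXX rho delta mu /\
  is_ydmor tunit X H (unit_act H epH) (unit_coact H etaH) rho delta eta /\
  is_ydmor X (X ⊗ₒ X) H rho delta rhoXX deltaXX De /\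
  is_ydmor X tunit H rho delta (unit_act H epH) (unit_coact H etaH) ep /\
  is_ydmor X X H rho delta rho delta S /\
  bgroup X (yd_braid X X H rho delta PhiXX) mu eta De ep S.

(* [X] with A-structure ([rhoXA], [deltaXA]) and B-structure ([rhoXB],
   [deltaXB]) is an object of YD(YD(C)^A_A)^B_B, where [B] (with A-structure
   [rhoBA], [deltaBA]) is a bialgebra in D = YD(C)^A_A.  The braiding of D is
   the crossed-module braiding [yd_braid]. *)
Definition is_yd_D {C : bsmcat} (A B X : Ob C)
  (muA : Hom (A ⊗ₒ A) A) (DeA : Hom A (A ⊗ₒ A))
  (rhoBA : Hom (B ⊗ₒ A) B) (deltaBA : Hom B (B ⊗ₒ A))
  (muB : Hom (B ⊗ₒ B) B) (etaB : Hom tunit B) (DeB : Hom B (B ⊗ₒ B)) (epB : Hom B tunit)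
  (rhoXA : Hom (X ⊗ₒ A) X) (deltaXA : Hom X (X ⊗ₒ A))
  (rhoXB : Hom (X ⊗ₒ B) X) (deltaXB : Hom X (X ⊗ₒ B)) : Prop :=
  let rhoXB_A := tens_act X B A DeA rhoXA rhoBA (braid B A) in
  let deltaXB_A := tens_coact X B A muA deltaXA deltaBA (braid A B) in
  is_ydmor (X ⊗ₒ B) X A rhoXB_A deltaXB_A rhoXA deltaXA rhoXB /\
  is_ydmor X (X ⊗ₒ B) A rhoXA deltaXA rhoXB_A deltaXB_A deltaXB /\
  is_yd X B muB etaB DeB epB
    (yd_braid B X A rhoBA deltaXA (braid B X))
    (yd_braid X B A rhoXA deltaBA (braid X B))
    (yd_braid B B A rhoBA deltaBA (braid B B))
    rhoXB deltaXB.

(** * Cross product [H ⋊ X] on [H ⊗ X]: [H] a braided group in an ambient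
    braided category with braidings [PhiXH], [PhiHX], and [X] a braided group
    in crossed modules over [H] with action [rhoX], coaction [deltaX]. *)
Definition cp_mul {C : bsmcat} (H X : Ob C) (muH : Hom (H ⊗ₒ H) H)
  (DeH : Hom H (H ⊗ₒ H)) (muX : Hom (X ⊗ₒ X) X) (rhoX : Hom (X ⊗ₒ H) X)
  (PhiXH : Hom (X ⊗ₒ H) (H ⊗ₒ X)) : Hom ((H ⊗ₒ X) ⊗ₒ (H ⊗ₒ X)) (H ⊗ₒ X).
refine ((muH ⊗ muX) ∘ κ ∘ (idm H ⊗ (idm H ⊗ (rhoX ⊗ idm X))) ∘ κ
          ∘ (idm H ⊗ (PhiXH ⊗ idm (H ⊗ₒ X))) ∘ κ
          ∘ (idm H ⊗ (idm X ⊗ (DeH ⊗ idm X))) ∘ κ).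
all: oeq.
Defined.

Definition cp_unit {C : bsmcat} (H X : Ob C) (etaH : Hom tunit H) (etaX : Hom tunit X)
  : Hom tunit (H ⊗ₒ X) := (etaH ⊗ etaX) ∘ cast (eq_sym (tens1l tunit)).

Definition cp_comul {C : bsmcat} (H X : Ob C) (DeH : Hom H (H ⊗ₒ H))
  (muH : Hom (H ⊗ₒ H) H) (DeX : Hom X (X ⊗ₒ X)) (deltaX : Hom X (X ⊗ₒ H))
  (PhiHX : Hom (H ⊗ₒ X) (X ⊗ₒ H)) : Hom (H ⊗ₒ X) ((H ⊗ₒ X) ⊗ₒ (H ⊗ₒ X)).
refine (κ ∘ (idm H ⊗ (idm X ⊗ (muH ⊗ idm X))) ∘ κ
          ∘ (idm H ⊗ (PhiHX ⊗ idm (H ⊗ₒ X))) ∘ κ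
          ∘ (idm H ⊗ (idm H ⊗ (deltaX ⊗ idm X))) ∘ κ ∘ (DeH ⊗ DeX)).
all: oeq.
Defined.

Definition cp_counit {C : bsmcat} (H X : Ob C) (epH : Hom H tunit) (epX : Hom X tunit)
  : Hom (H ⊗ₒ X) tunit := cast (tens1l tunit) ∘ (epH ⊗ epX).

(** * The identification YD(YD(C)^A_A)^B_B ≅ YD(C)^{A⋊B}_{A⋊B} on objects:
    action mu^B_r ∘ (mu^A_r ⊗ B), coaction (Delta^A_r ⊗ B) ∘ Delta^B_r. *)
Definition nested_act {C : bsmcat} (X A B : Ob C) (rhoA : Hom (X ⊗ₒ A) X)
  (rhoB : Hom (X ⊗ₒ B) X) : Hom (X ⊗ₒ (A ⊗ₒ B)) X :=
  rhoB ∘ (rhoA ⊗ idm B) ∘ cast (tensA X A B).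
Definition nested_coact {C : bsmcat} (X A B : Ob C) (deltaA : Hom X (X ⊗ₒ A))
  (deltaB : Hom X (X ⊗ₒ B)) : Hom X (X ⊗ₒ (A ⊗ₒ B)) :=
  cast (eq_sym (tensA X A B)) ∘ (deltaA ⊗ idm B) ∘ deltaB.

(** * Transport of bialgebra structure maps along an equality of underlying
    objects (in a strict category (A⊗B)⊗C = A⊗(B⊗C)). *)
Definition tr_mul {C : bsmcat} {X Y : Ob C} (e : X = Y) (m : Hom (X ⊗ₒ X) X)
  : Hom (Y ⊗ₒ Y) Y := match e in _ = Z return Hom (Z ⊗ₒ Z) Z with eq_refl => m end.
Definition tr_unit {C : bsmcat} {X Y : Ob C} (e : X = Y) (u : Hom tunit X)
  : Hom tunit Y := match e in _ = Z return Hom tunit Z with eq_refl => u end.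
Definition tr_comul {C : bsmcat} {X Y : Ob C} (e : X = Y) (d : Hom X (X ⊗ₒ X))
  : Hom Y (Y ⊗ₒ Y) := match e in _ = Z return Hom Z (Z ⊗ₒ Z) with eq_refl => d end.
Definition tr_counit {C : bsmcat} {X Y : Ob C} (e : X = Y) (c : Hom X tunit)
  : Hom Y tunit := match e in _ = Z return Hom Z tunit with eq_refl => c end.

(* Main.v *)
Require Import Defs.
From Stdlib Require Import List ProofIrrelevance.
Import ListNotations.

Existing Class is_bsmcat.
Section Found.
Context {K : bsmcat} {HK : is_bsmcat K}.

Lemma cA {a b c d : Ob K} (f : Hom a b) (g : Hom b c) (h : Hom c d) : h ∘ (g ∘ f) = (h ∘ g) ∘ f.
Proof. apply (compA K HK). Qed.
Lemma c1l {a b : Ob K} (f : Hom a b) : idm b ∘ f = f.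
Proof. apply (comp1l K HK). Qed.
Lemma c1r {a b : Ob K} (f : Hom a b) : f ∘ idm a = f.
Proof. apply (comp1r K HK). Qed.
Lemma tmc {a b c a' b' c' : Ob K} (f : Hom a b) (g : Hom b c) (f' : Hom a' b') (g' : Hom b' c') :
  (g ∘ f) ⊗ (g' ∘ f') = (g ⊗ g') ∘ (f ⊗ f').
Proof. apply (tm_comp K HK). Qed.
Lemma tmi (a b : Ob K) : idm a ⊗ idm b = idm (a ⊗ₒ b).
Proof. apply (tm_id K HK). Qed.

Lemma cast_refl (x : Ob K) (e : x = x) : cast e = idm x.
Proof. rewrite (proof_irrelevance _ e eq_refl). reflexivity. Qed.
Lemma cast_irr {x y : Ob K} (e e' : x = y) : cast e = cast e'.
Proof. rewrite (proof_irrelevance _ e e'). reflexivity. Qed.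
Lemma cast_tr {x y z : Ob K} (e1 : x = y) (e2 : y = z) : cast e2 ∘ cast e1 = cast (eq_trans e1 e2).
Proof. destruct e2, e1. simpl. apply c1l. Qed.
Lemma cast_trP {w x y z : Ob K} (P : Hom z w) (e1 : x = y) (e2 : y = z) :
  P ∘ cast e2 ∘ cast e1 = P ∘ cast (eq_trans e1 e2).
Proof. rewrite <- cA, cast_tr. reflexivity. Qed.
Lemma tm_cc {a b c d : Ob K} (e1 : a = b) (e2 : c = d) :
  cast e1 ⊗ cast e2 = cast (f_equal2 tens e1 e2).
Proof. destruct e1, e2. rewrite !cast_refl. apply tmi. Qed.
Lemma pull_l {a b c d a' b' : Ob K} (e1 : b = b') (e2 : a' = a) (x : Hom a b) (y : Hom c d) :
  (cast e1 ∘ x ∘ cast e2) ⊗ y = cast (f_equal (fun z => z ⊗ₒ d) e1) ∘ (x ⊗ y) ∘ cast (f_equal (fun z => z ⊗ₒ c) e2).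
Proof. destruct e1, e2. simpl. rewrite c1l, c1r, c1l, c1r. reflexivity. Qed.
Lemma pull_r {a b c d c' d' : Ob K} (e1 : d = d') (e2 : c' = c) (x : Hom a b) (y : Hom c d) :
  x ⊗ (cast e1 ∘ y ∘ cast e2) = cast (f_equal (fun z => b ⊗ₒ z) e1) ∘ (x ⊗ y) ∘ cast (f_equal (fun z => a ⊗ₒ z) e2).
Proof. destruct e1, e2. simpl. rewrite c1l, c1r, c1l, c1r. reflexivity. Qed.
Lemma assoc_r {a b c d e f : Ob K} (x : Hom a b) (y : Hom c d) (z : Hom e f) :
  (x ⊗ y) ⊗ z = cast (tensA b d f) ∘ (x ⊗ (y ⊗ z)) ∘ cast (eq_sym (tensA a c e)).
Proof.
  rewrite (tmA K HK). rewrite <- cA, cast_tr, cast_refl, c1r. reflexivity.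
Qed.
Lemma unit_l {a b : Ob K} (f : Hom a b) :
  idm tunit ⊗ f = cast (eq_sym (tens1l b)) ∘ f ∘ cast (tens1l a).
Proof.
  rewrite <- cA, <- (tm1l K HK), cA, cast_tr, cast_refl, c1l. reflexivity.
Qed.
Lemma unit_r {a b : Ob K} (f : Hom a b) :
  f ⊗ idm tunit = cast (eq_sym (tens1r b)) ∘ f ∘ cast (tens1r a).
Proof.
  rewrite <- cA, <- (tm1r K HK), cA, cast_tr, cast_refl, c1l. reflexivity.
Qed.


Fixpoint den (u : list (Ob K)) : Ob K :=
  match u with
  | [] => tunit
  | [x] => x
  | x :: u' => x ⊗ₒ den u'
  end.
Definition FM (u v : list (Ob K)) := Hom (den u) (den v).

Lemma den_cons x w : den (x :: w) = x ⊗ₒ den w.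
Proof. destruct w. - exact (eq_sym (tens1r x)). - reflexivity. Qed.
Lemma den_app u v : den (u ++ v) = den u ⊗ₒ den v.
Proof.
  induction u as [|x u IH].
  - exact (eq_sym (tens1l _)).
  - change ((x :: u) ++ v) with (x :: (u ++ v)).
    rewrite (den_cons x (u ++ v)), IH, tensA, <- (den_cons x u). reflexivity.
Qed.
Lemma den3 u s v : den (u ++ s ++ v) = den u ⊗ₒ (den s ⊗ₒ den v).
Proof. rewrite den_app, den_app. reflexivity. Qed.

Definition W (u : list (Ob K)) {s t} (f : FM s t) (v : list (Ob K)) : FM (u ++ s ++ v) (u ++ t ++ v) :=
  cast (eq_sym (den3 u t v)) ∘ (idm (den u) ⊗ (f ⊗ idm (den v))) ∘ cast (den3 u s v).
Definition dc {l1 l2 : list (Ob K)} (H : l1 = l2) : FM l1 l2 := cast (f_equal den H).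

Lemma tmcP {z a b c a' b' c' : Ob K} (P : Hom (c ⊗ₒ c') z) (f : Hom a b) (g : Hom b c) (f' : Hom a' b') (g' : Hom b' c') :
  P ∘ (g ⊗ g') ∘ (f ⊗ f') = P ∘ ((g ∘ f) ⊗ (g' ∘ f')).
Proof. rewrite tmc, cA. reflexivity. Qed.
Lemma idm_split p q : idm (den (p ++ q)) = cast (eq_sym (den_app p q)) ∘ (idm (den p) ⊗ idm (den q)) ∘ cast (den_app p q).
Proof. rewrite tmi, c1r, cast_tr, cast_refl. reflexivity. Qed.

End Found.

Ltac cnorm := repeat progress (rewrite ?cA; rewrite ?cast_trP, ?cast_tr; rewrite ?cast_refl; rewrite ?c1l, ?c1r).
Ltac tmerge := repeat progress (rewrite ?tmcP; rewrite <- ?tmc).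
Ltac pulls := repeat progress (rewrite ?pull_l, ?pull_r, ?assoc_r).
Ltac cfin := repeat match goal with
  | |- ?a = ?a => reflexivity
  | |- cast ?e = cast ?e' => apply cast_irr
  | |- _ => f_equal
  end.
Ltac wsolve := unfold W, dc; rewrite ?idm_split; pulls; cnorm; tmerge; rewrite ?c1l, ?c1r; repeat rewrite ?tmi, ?c1l, ?c1r; cnorm; cfin.

Section G.
Context {K : bsmcat} {HK : is_bsmcat K}.
Lemma Wc (u v : list (Ob K)) {s r t : list (Ob K)} (f : FM r t) (g : FM s r) : W u f v ∘ W u g v = W u (f ∘ g) v.
Proof. wsolve. Qed.
Lemma Wi (u s v : list (Ob K)) : W u (idm (den s)) v = idm _.
Proof. unfold W. rewrite !tmi, c1r, cast_tr, cast_refl. reflexivity. Qed.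
Lemma lA5 (u a m b v : list (Ob K)) : u ++ a ++ m ++ b ++ v = (u ++ a ++ m) ++ b ++ v.
Proof. rewrite !app_assoc. reflexivity. Qed.
Lemma Wx (u m v : list (Ob K)) {s1 t1 s2 t2} (f : FM s1 t1) (g : FM s2 t2) :
  dc (eq_sym (lA5 u t1 m t2 v)) ∘ W (u ++ t1 ++ m) g v ∘ dc (lA5 u t1 m s2 v) ∘ W u f (m ++ s2 ++ v)
  = W u f (m ++ t2 ++ v) ∘ dc (eq_sym (lA5 u s1 m t2 v)) ∘ W (u ++ s1 ++ m) g v ∘ dc (lA5 u s1 m s2 v).
Proof. wsolve. Qed.
Lemma lAn (u u' s v' v : list (Ob K)) : u ++ (u' ++ s ++ v') ++ v = (u ++ u') ++ s ++ (v' ++ v).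
Proof. rewrite !app_assoc. reflexivity. Qed.
Lemma Wn (u u' v' v : list (Ob K)) {s t} (f : FM s t) :
  W u (W u' f v') v = dc (eq_sym (lAn u u' t v' v)) ∘ W (u ++ u') f (v' ++ v) ∘ dc (lAn u u' s v' v).
Proof. wsolve. Qed.
Lemma idm_cast {x y : Ob K} (e : x = y) : idm x = cast (eq_sym e) ∘ idm y ∘ cast e.
Proof. destruct e. simpl. rewrite c1l, c1l. reflexivity. Qed.
Lemma idm_as_cast (x : Ob K) : idm x = cast (eq_refl x).
Proof. reflexivity. Qed.
Lemma Wcast_eq (u v : list (Ob K)) {s t} (e : den s = den t) : den (u ++ s ++ v) = den (u ++ t ++ v).
Proof. rewrite !den3, e. reflexivity. Qed.
Lemma Wcast (u v : list (Ob K)) {s t} (e : den s = den t) : W u (cast e : FM s t) v = cast (Wcast_eq u v e).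
Proof. unfold W. rewrite (idm_as_cast (den u)), (idm_as_cast (den v)), !tm_cc. cnorm. apply cast_irr. Qed.
Lemma Wreg_eq1 (u u' v v' s : list (Ob K)) (eu : den u = den u') (ev : den v = den v') :
  den (u ++ s ++ v) = den (u' ++ s ++ v').
Proof. rewrite !den3, eu, ev. reflexivity. Qed.
Lemma Wreg (u u' v v' : list (Ob K)) {s t} (f : FM s t) (eu : den u = den u') (ev : den v = den v') :
  W u f v = cast (eq_sym (Wreg_eq1 u u' v v' t eu ev)) ∘ W u' f v' ∘ cast (Wreg_eq1 u u' v v' s eu ev).
Proof. unfold W. rewrite (idm_cast eu), (idm_cast ev). pulls. cnorm. cfin. Qed.
Lemma Wf_eq (u v s s' : list (Ob K)) (e : den s = den s') : den (u ++ s ++ v) = den (u ++ s' ++ v).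
Proof. rewrite !den3, e. reflexivity. Qed.
Lemma Wf (u v : list (Ob K)) {s t s' t'} (f : FM s' t') (e1 : den t' = den t) (e2 : den s = den s') :
  W u (cast e1 ∘ f ∘ cast e2 : FM s t) v = cast (Wf_eq u v t' t e1) ∘ W u f v ∘ cast (Wf_eq u v s s' e2).
Proof. unfold W. pulls. cnorm. cfin. Qed.
Definition Br (s t : list (Ob K)) : FM (s ++ t) (t ++ s) :=
  cast (eq_sym (den_app t s)) ∘ braid (den s) (den t) ∘ cast (den_app s t).
Lemma bnP {z a b c d : Ob K} (P : Hom (d ⊗ₒ c) z) (f : Hom a c) (g : Hom b d) :
  P ∘ braid c d ∘ (f ⊗ g) = P ∘ (g ⊗ f) ∘ braid a b.
Proof. rewrite <- cA, (braid_nat K HK), cA. reflexivity. Qed.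
Lemma braid_e {a a' b b' : Ob K} (e1 : a = a') (e2 : b = b') :
  braid a b = cast (f_equal2 tens (eq_sym e2) (eq_sym e1)) ∘ braid a' b' ∘ cast (f_equal2 tens e1 e2).
Proof. destruct e1, e2. rewrite !cast_refl, c1l, c1r. reflexivity. Qed.
Lemma unil {a b : Ob K} (f : Hom a b) :
  idm (den []) ⊗ f = cast (eq_sym (tens1l b)) ∘ f ∘ cast (tens1l a).
Proof. apply unit_l. Qed.
Lemma unir {a b : Ob K} (f : Hom a b) :
  f ⊗ idm (den []) = cast (eq_sym (tens1r b)) ∘ f ∘ cast (tens1r a).
Proof. apply unit_r. Qed.
Lemma Br11 (x y : Ob K) : Br [x] [y] = braid x y.
Proof. unfold Br. rewrite !cast_refl, c1l, c1r. reflexivity. Qed.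
Lemma lnil (t s : list (Ob K)) : t ++ s = t ++ s ++ [].
Proof. rewrite app_nil_r. reflexivity. Qed.
Lemma BrNatL (s s' t : list (Ob K)) (f : FM s s') :
  Br s' t ∘ W [] f t = dc (eq_sym (lnil t s')) ∘ W t f [] ∘ dc (lnil t s) ∘ Br s t.
Proof. unfold Br, W, dc. rewrite ?unil, ?unir. pulls. cnorm. rewrite bnP. cnorm. cfin. Qed.
Lemma BrNatR (s t t' : list (Ob K)) (g : FM t t') :
  Br s t' ∘ dc (eq_sym (lnil s t')) ∘ W s g [] ∘ dc (lnil s t) = W [] g s ∘ Br s t.
Proof. unfold Br, W, dc. rewrite ?unil, ?unir. pulls. cnorm. rewrite bnP. cnorm. cfin. Qed.
Lemma lh1 (s t r : list (Ob K)) : t ++ (r ++ s) ++ [] = (t ++ r) ++ s.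
Proof. rewrite app_nil_r, app_assoc. reflexivity. Qed.
Lemma lh2 (s t r : list (Ob K)) : (t ++ s) ++ r = t ++ (s ++ r) ++ [].
Proof. rewrite app_nil_r, app_assoc. reflexivity. Qed.
Lemma lh3 (s t r : list (Ob K)) : s ++ t ++ r = (s ++ t) ++ r.
Proof. rewrite app_assoc. reflexivity. Qed.
Lemma Hex1 (s t r : list (Ob K)) :
  Br s (t ++ r) = dc (lh1 s t r) ∘ W t (Br s r) [] ∘ dc (lh2 s t r) ∘ W [] (Br s t) r ∘ dc (lh3 s t r).
Proof.
  unfold Br, W, dc. rewrite (braid_e eq_refl (den_app t r)), (hex1 K HK).
  rewrite ?unil, ?unir. pulls. cnorm. cfin.
Qed.
Lemma lh4 (s t r : list (Ob K)) : (s ++ t) ++ r = s ++ (t ++ r) ++ [].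
Proof. rewrite app_nil_r, app_assoc. reflexivity. Qed.
Lemma lh5 (s t r : list (Ob K)) : s ++ (r ++ t) ++ [] = (s ++ r) ++ t.
Proof. rewrite app_nil_r, app_assoc. reflexivity. Qed.
Lemma lh6 (s t r : list (Ob K)) : (r ++ s) ++ t = r ++ s ++ t.
Proof. rewrite app_assoc. reflexivity. Qed.
Lemma Hex2 (s t r : list (Ob K)) :
  Br (s ++ t) r = dc (lh6 s t r) ∘ W [] (Br s r) t ∘ dc (lh5 s t r) ∘ W s (Br t r) [] ∘ dc (lh4 s t r).
Proof.
  unfold Br, W, dc. rewrite (braid_e (den_app s t) eq_refl), (hex2 K HK).
  rewrite ?unil, ?unir. pulls. cnorm. cfin.
Qed.
End G.
Ltac csolve := unfold W, dc; cbn [den app]; rewrite <- ?tmi; rewrite ?unit_l, ?unit_r; pulls; cnorm; tmerge; rewrite ?c1l, ?c1r; repeat rewrite ?tmi, ?c1l, ?c1r; cnorm; cfin.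
Section C.
Context {K : bsmcat} {HK : is_bsmcat K}.
Lemma cp_mul_W (H X : Ob K) muH DeH muX rhoX Phi :
  cp_mul H X muH DeH muX rhoX Phi = cast (eq_refl (H ⊗ₒ X)) ∘
   (W [H] (muX : FM [X;X] [X]) [] ∘ W [] (muH : FM [H;H] [H]) [X;X] ∘ W [H;H] (rhoX : FM [X;H] [X]) [X]
    ∘ W [H] (Phi : FM [X;H] [H;X]) [H;X] ∘ W [H;X] (DeH : FM [H] [H;H]) [X]) ∘ cast (eq_sym (tensA H X (H ⊗ₒ X))).
Proof. unfold cp_mul. csolve. Qed.
Lemma cp_comul_W (H X : Ob K) DeH muH DeX deltaX Phi :
  cp_comul H X DeH muH DeX deltaX Phi = cast (tensA H X (H ⊗ₒ X)) ∘
   (W [H;X] (muH : FM [H;H] [H]) [X] ∘ W [H] (Phi : FM [H;X] [X;H]) [H;X] ∘ W [H;H] (deltaX : FM [X] [X;H]) [X]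
    ∘ W [] (DeH : FM [H] [H;H]) [X;X] ∘ W [H] (DeX : FM [X] [X;X]) []) ∘ cast (eq_refl (H ⊗ₒ X)).
Proof. unfold cp_comul. csolve. Qed.
Lemma tens_act_W (X Y H : Ob K) DeH rhoX rhoY Phi :
  tens_act X Y H DeH rhoX rhoY Phi = cast (eq_refl (X ⊗ₒ Y)) ∘
   (W [X] (rhoY : FM [Y;H] [Y]) [] ∘ W [] (rhoX : FM [X;H] [X]) [Y;H] ∘ W [X] (Phi : FM [Y;H] [H;Y]) [H]
    ∘ W [X;Y] (DeH : FM [H] [H;H]) []) ∘ cast (eq_sym (tensA X Y H)).
Proof. unfold tens_act. csolve. Qed.
Lemma tens_coact_W (X Y H : Ob K) muH dX dY Phi :
  tens_coact X Y H muH dX dY Phi = cast (tensA X Y H) ∘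
   (W [X;Y] (muH : FM [H;H] [H]) [] ∘ W [X] (Phi : FM [H;Y] [Y;H]) [H] ∘ W [] (dX : FM [X] [X;H]) [Y;H]
    ∘ W [X] (dY : FM [Y] [Y;H]) []) ∘ cast (eq_refl (X ⊗ₒ Y)).
Proof. unfold tens_coact. csolve. Qed.
Lemma yd_braid_W (X Y H : Ob K) rhoX dY Phi :
  yd_braid X Y H rhoX dY Phi = 
   W [Y] (rhoX : FM [X;H] [X]) [] ∘ W [] (Phi : FM [X;Y] [Y;X]) [H] ∘ W [X] (dY : FM [Y] [Y;H]) [].
Proof. unfold yd_braid. csolve. Qed.
Lemma nested_act_W (X A B : Ob K) rA rB :
  nested_act X A B rA rB = (rB : FM [X;B] [X]) ∘ W [] (rA : FM [X;A] [X]) [B].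
Proof. unfold nested_act. csolve. Qed.
Lemma nested_coact_W (X A B : Ob K) dA dB :
  nested_coact X A B dA dB = W [] (dA : FM [X] [X;A]) [B] ∘ (dB : FM [X] [X;B]).
Proof. unfold nested_coact. csolve. Qed.
Lemma braid_Br (s t : list (Ob K)) : braid (den s) (den t) = cast (den_app t s) ∘ Br s t ∘ cast (eq_sym (den_app s t)).
Proof. unfold Br. cnorm. reflexivity. Qed.
Lemma dist_l {a b c x y : Ob K} (g : Hom b c) (f : Hom a b) (h : Hom x y) :
  (g ∘ f) ⊗ h = (g ⊗ h) ∘ (f ⊗ idm x).
Proof. rewrite <- tmc, c1r. reflexivity. Qed.
Lemma dist_r {a b c x y : Ob K} (g : Hom b c) (f : Hom a b) (h : Hom x y) :
  h ⊗ (g ∘ f) = (h ⊗ g) ∘ (idm x ⊗ f).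
Proof. rewrite <- tmc, c1r. reflexivity. Qed.
Lemma split_tm {a b c d : Ob K} (g : Hom a b) (h : Hom c d) : g ⊗ h = (g ⊗ idm d) ∘ (idm a ⊗ h).
Proof. rewrite <- tmc, c1r, c1l. reflexivity. Qed.
Lemma cast_tm_l {a b : Ob K} (e : a = b) (x : Ob K) : cast e ⊗ idm x = cast (f_equal (fun z => z ⊗ₒ x) e).
Proof. destruct e. simpl. apply tmi. Qed.
Lemma cast_tm_r {a b : Ob K} (e : a = b) (x : Ob K) : idm x ⊗ cast e = cast (f_equal (fun z => x ⊗ₒ z) e).
Proof. destruct e. simpl. apply tmi. Qed.
End C.

Ltac is_idt t := lazymatch t with idm _ => idtac | tm ?a ?b => is_idt a; is_idt b end.
Ltac nsplit := match goal with |- context [tm ?g ?h] =>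
   tryif is_idt g then fail else tryif is_idt h then fail else rewrite (split_tm g h) end.
Ltac phase1 := repeat progress (rewrite ?dist_l, ?dist_r, ?cast_tm_l, ?cast_tm_r; try nsplit).
Ltac phase2 := rewrite <- ?tmi; repeat progress (rewrite ?unit_l, ?unit_r, ?assoc_r; pulls).
Ltac nf := unfold W, dc; cbn [den app]; phase1; phase2; cnorm.


Definition bb {K : bsmcat} (x y : Ob K) : FM [x;y] [y;x] := braid x y.
Lemma Br11' {K : bsmcat} {HK : is_bsmcat K} (x y : Ob K) : Br [x] [y] = bb x y.
Proof. apply Br11. Qed.

Ltac inst H := cbn [app] in H; unfold dc in H; rewrite ?cast_refl in H; rewrite ?c1l, ?c1r in H; rewrite ?Br11' in H; rewrite ?cA in H.
Ltac grp L := lazymatch L with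
  | comp (comp ?x ?y) ?z => grp (comp x y); rewrite <- (cA z (comp x y))
  | comp ?x ?y => rewrite <- (cA y x)
  end.
Ltac rw H := let T := type of H in lazymatch T with
  | ?L = _ => cbn [app]; first [ rewrite H | (grp L; cbn [app]; rewrite H) ]; rewrite ?cA; cbn [app]
  end.
Ltac layer c k := lazymatch k with
  | O => lazymatch c with comp _ ?x => x | _ => c end
  | S ?k' => lazymatch c with comp ?r _ => layer r k' end end.
Ltac swp k := lazymatch goal with |- ?L = _ =>
  let Y := layer L k in let X := layer L (S k) in
  lazymatch Y with @W _ ?uy ?sy ?ty ?fy ?vy =>
  lazymatch X with @W _ ?ux ?sx ?tx ?fx ?vx =>
   let ly := eval cbn in (length uy + length ty) in
   let lx := eval cbn in (length ux) in
   let b := eval cbn in (Nat.leb ly lx) in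
   lazymatch b with
   | true => let m := eval cbn in (skipn ly ux) in
        let H := fresh in pose proof (Wx uy m vx fy fx) as H; inst H; rw H; clear H
   | false => let lx2 := eval cbn in (length ux + length sx) in
        let m := eval cbn in (skipn lx2 uy) in
        let H := fresh in pose proof (Wx ux m vy fx fy) as H; inst H; symmetry in H; rw H; clear H
   end end end end.
Ltac flatn H := repeat match type of H with context [@W _ ?u _ _ (@W _ ?u' ?s ?t ?f ?v') ?v] =>
   let E := fresh in pose proof (@Wn _ _ u u' v' v s t f) as E; cbn [app] in E, H; rewrite E in H; clear E end.
Ltac liftH E u v H := pose proof (f_equal (fun z => W u z v) E) as H; cbn beta in H;
  rewrite <- ?Wc in H; flatn H; inst H.
Ltac lift E u v := let H := fresh in liftH E u v H; rw H; clear H.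
Ltac lhs_only := match goal with |- _ = ?R => let r := fresh "R" in set (r := R) end.

Section D.
Context {K : bsmcat} {HK : is_bsmcat K} (A B C : Ob K)
  (muA : FM [A;A] [A]) (DeA : FM [A] [A;A])
  (rhoBA : FM [B;A] [B]) (deltaBA : FM [B] [B;A])
  (muB : FM [B;B] [B]) (DeB : FM [B] [B;B])
  (rhoCA : FM [C;A] [C]) (deltaCA : FM [C] [C;A])
  (rhoCB : FM [C;B] [C]) (deltaCB : FM [C] [C;B])
  (muC : FM [C;C] [C]) (DeC : FM [C] [C;C]).

Lemma mul_diag (modCA : rhoCA ∘ W [C] muA [] = rhoCA ∘ W [] rhoCA [A])
  (coassA : W [A] DeA [] ∘ DeA = W [] DeA [A] ∘ DeA) :
  W [] muA [B;C] ∘ W [A;A] muB [C] ∘ W [A;A;B;B] muC [] ∘ W [A;A] rhoBA [B;C;C] ∘ W [A] (bb B A) [A;B;C;C]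
  ∘ W [A;B] DeA [B;C;C] ∘ W [A;B;A;B] rhoCB [C] ∘ W [A;B;A;B] rhoCA [B;C] ∘ W [A;B;A] (bb C B) [A;B;C]
  ∘ W [A;B] (bb C A) [B;A;B;C] ∘ W [A;B;C;A;B] muA [B;C] ∘ W [A;B;C;A] (bb A B) [A;B;C]
  ∘ W [A;B;C;A;A] deltaBA [B;C] ∘ W [A;B;C] DeA [B;B;C] ∘ W [A;B;C;A] DeB [C]
  =
  W [] muA [B;C] ∘ W [A;A] muB [C] ∘ W [A;A;B;B] muC [] ∘ W [A;A;B;B] rhoCB [C] ∘ W [A;A;B;B] rhoCA [B;C]
  ∘ W [A;A;B] (bb C B) [A;B;C] ∘ W [A;A;B;C] deltaBA [B;C] ∘ W [A;A;B;C] DeB [C]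
  ∘ W [A;A] rhoBA [C;B;C] ∘ W [A;A;B;A] rhoCA [B;C] ∘ W [A;A;B] (bb C A) [A;B;C]
  ∘ W [A;A;B;C] DeA [B;C] ∘ W [A] (bb B A) [C;A;B;C] ∘ W [A;B] (bb C A) [A;B;C] ∘ W [A;B;C] DeA [B;C].
Proof.
  lhs_only. rewrite ?cA.
  swp 4. swp 5.
  lift modCA [A;B;A;B] [B;C].
  swp 3.
  pose proof (Hex2 [C] [A] [B]) as Eh. inst Eh. symmetry in Eh. lift Eh [A;B;A] [A;B;C].
  pose proof (BrNatL [C;A] [C] [B] rhoCA) as En. inst En. symmetry in En. lift En [A;B;A] [A;B;C].
  swp 7. swp 6. swp 5. swp 4.
  pose proof (BrNatR [C] [A] [A;A] DeA) as E1. inst E1. symmetry in E1. lift E1 [A;B] [A;B;A;B;C].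
  pose proof (Hex1 [C] [A] [A]) as E2. inst E2. lift E2 [A;B] [A;B;A;B;C].
  swp 2.
  pose proof coassA as E3. symmetry in E3. lift E3 [A;B;C] [B;B;C].
  swp 3. swp 4. swp 5.
  swp 0. swp 1. swp 2. swp 3. swp 4.
  swp 9. swp 8. swp 7. swp 6. swp 5.
  swp 10. swp 9. swp 8. swp 7. swp 6.
  swp 4. swp 3. swp 1. swp 2.
  subst R. reflexivity.
Qed.
Lemma mul_diag2 (modCA : rhoCA ∘ W [C] muA [] = rhoCA ∘ W [] rhoCA [A])
  (coassA : W [A] DeA [] ∘ DeA = W [] DeA [A] ∘ DeA) :
  W [A;B] muC [] ∘ W [A] muB [C;C] ∘ W [] muA [B;B;C;C] ∘ W [A;A] rhoBA [B;C;C] ∘ W [A] (bb B A) [A;B;C;C] ∘ W [A;B] DeA [B;C;C] ∘ W [A;B;A;B] rhoCB [C] ∘ W [A;B;A;B] rhoCA [B;C] ∘ W [A;B;A] (bb C B) [A;B;C] ∘ W [A;B] (bb C A) [B;A;B;C] ∘ W [A;B;C;A;B] muA [B;C] ∘ W [A;B;C;A] (bb A B) [A;B;C] ∘ W [A;B;C;A;A] deltaBA [B;C] ∘ W [A;B;C] DeA [B;B;C] ∘ W [A;B;C;A] DeB [C] = W [A;B] muC [] ∘ W [A] muB [C;C] ∘ W [A;B;B] rhoCB [C] ∘ W [A;B;B] rhoCA [B;C] ∘ W [A;B] (bb C B) [A;B;C] ∘ W [A;B;C] deltaBA [B;C] ∘ W [A;B;C] DeB [C] ∘ W [] muA [B;C;B;C]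 ∘ W [A;A;B] rhoCA [B;C] ∘ W [A;A] rhoBA [C;A;B;C] ∘ W [A;A;B] (bb C A) [A;B;C] ∘ W [A;A;B;C] DeA [B;C] ∘ W [A] (bb B A) [C;A;B;C] ∘ W [A;B] (bb C A) [A;B;C] ∘ W [A;B;C] DeA [B;C].
Proof.
  transitivity (W [] muA [B;C] ∘ W [A;A] muB [C] ∘ W [A;A;B;B] muC [] ∘ W [A;A] rhoBA [B;C;C] ∘ W [A] (bb B A) [A;B;C;C]
  ∘ W [A;B] DeA [B;C;C] ∘ W [A;B;A;B] rhoCB [C] ∘ W [A;B;A;B] rhoCA [B;C] ∘ W [A;B;A] (bb C B) [A;B;C]
  ∘ W [A;B] (bb C A) [B;A;B;C] ∘ W [A;B;C;A;B] muA [B;C] ∘ W [A;B;C;A] (bb A B) [A;B;C]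
  ∘ W [A;B;C;A;A] deltaBA [B;C] ∘ W [A;B;C] DeA [B;B;C] ∘ W [A;B;C;A] DeB [C]).
  { lhs_only. rewrite ?cA. swp 12. swp 13. swp 12. subst R. reflexivity. }
  transitivity (W [] muA [B;C] ∘ W [A;A] muB [C] ∘ W [A;A;B;B] muC [] ∘ W [A;A;B;B] rhoCB [C] ∘ W [A;A;B;B] rhoCA [B;C]
  ∘ W [A;A;B] (bb C B) [A;B;C] ∘ W [A;A;B;C] deltaBA [B;C] ∘ W [A;A;B;C] DeB [C]
  ∘ W [A;A] rhoBA [C;B;C] ∘ W [A;A;B;A] rhoCA [B;C] ∘ W [A;A;B] (bb C A) [A;B;C]
  ∘ W [A;A;B;C] DeA [B;C] ∘ W [A] (bb B A) [C;A;B;C] ∘ W [A;B] (bb C A) [A;B;C] ∘ W [A;B;C] DeA [B;C]).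
  { apply mul_diag; assumption. }
  symmetry. lhs_only. rewrite ?cA.
  swp 5. swp 7. swp 8. swp 9. swp 10. swp 11. swp 12. swp 13. swp 12.
  subst R. reflexivity.
Qed.
Lemma comul_diag (comodCA : W [C] DeA [] ∘ deltaCA = W [] deltaCA [A] ∘ deltaCA)
  (assocA : muA ∘ W [] muA [A] = muA ∘ W [A] muA []) :
  W [A;B;C] muA [B;C] ∘ W [A;B;C;A;A] muB [C] ∘ W [A;B;C;A;A] rhoBA [B;C] ∘ W [A;B;C;A] (bb B A) [A;B;C]
  ∘ W [A;B;C;A;B] DeA [B;C] ∘ W [A;B] (bb A C) [B;A;B;C] ∘ W [A;B;A] (bb B C) [A;B;C]
  ∘ W [A;B;A;B] deltaCA [B;C] ∘ W [A;B;A;B] deltaCB [C] ∘ W [A;B;A;B] DeC []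
  ∘ W [A;B] muA [B;C] ∘ W [A] (bb A B) [A;B;C] ∘ W [A;A] deltaBA [B;C] ∘ W [] DeA [B;B;C] ∘ W [A] DeB [C]
  =
  W [A;B;C] muA [B;C] ∘ W [A;B] (bb A C) [A;B;C] ∘ W [A] (bb A B) [C;A;B;C] ∘ W [A;A;B;C] muA [B;C]
  ∘ W [A;A;B] (bb A C) [A;B;C] ∘ W [A;A] deltaBA [C;A;B;C] ∘ W [A;A;B] deltaCA [B;C] ∘ W [] DeA [B;C;B;C]
  ∘ W [A;B;C] muB [C] ∘ W [A;B;C] rhoBA [B;C] ∘ W [A;B] (bb B C) [A;B;C] ∘ W [A;B;B] deltaCA [B;C]
  ∘ W [A;B;B] deltaCB [C] ∘ W [A] DeB [C;C] ∘ W [A;B] DeC [].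
Proof.
  lhs_only. rewrite ?cA.
  swp 9. swp 8. lift comodCA [A;B;A;B] [B;C].
  swp 10.
  pose proof (Hex1 [B] [C] [A]) as E1. inst E1. symmetry in E1. lift E1 [A;B;A] [A;B;C].
  pose proof (BrNatR [B] [C] [C;A] deltaCA) as E2. inst E2. lift E2 [A;B;A] [A;B;C].
  swp 4. swp 5. swp 6. swp 7. swp 8.
  pose proof (BrNatL [A;A] [A] [C] muA) as E3. inst E3. lift E3 [A;B] [A;B;A;B;C].
  pose proof (Hex2 [A] [A] [C]) as E4. inst E4. lift E4 [A;B] [A;B;A;B;C].
  swp 11. swp 12. lift assocA [A;B;C] [B;C].
  swp 3. swp 4. swp 5. swp 6. swp 7. swp 8. swp 10. swp 11. swp 12. swp 2. swp 3. swp 4. swp 5. swp 6. swp 9. swp 10. swp 11. swp 1. swp 2. swp 3. swp 4. swp 8. swp 9. swp 0. swp 7. swp 8. swp 6. swp 7. swp 5. swp 6.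
  subst R. reflexivity.
Qed.

Lemma comul_diag2 (comodCA : W [C] DeA [] ∘ deltaCA = W [] deltaCA [A] ∘ deltaCA)
  (assocA : muA ∘ W [] muA [A] = muA ∘ W [A] muA []) :
  W [A;B;C;A] muB [C] ∘ W [A;B;C] muA [B;B;C] ∘ W [A;B;C;A;A] rhoBA [B;C] ∘ W [A;B;C;A] (bb B A) [A;B;C] ∘ W [A;B;C;A;B] DeA [B;C] ∘ W [A;B] (bb A C) [B;A;B;C] ∘ W [A;B;A] (bb B C) [A;B;C] ∘ W [A;B;A;B] deltaCA [B;C] ∘ W [A;B;A;B] deltaCB [C] ∘ W [A;B] muA [B;C;C] ∘ W [A] (bb A B) [A;B;C;C] ∘ W [A;A] deltaBA [B;C;C] ∘ W [] DeA [B;B;C;C] ∘ W [A] DeB [C;C] ∘ W [A;B] DeC [] = W [A;B;C] muA [B;C] ∘ W [A;B] (bb A C) [A;B;C] ∘ W [A] (bb A B) [C;A;B;C] ∘ W [A;A;B;C] muA [B;C]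
  ∘ W [A;A;B] (bb A C) [A;B;C] ∘ W [A;A] deltaBA [C;A;B;C] ∘ W [A;A;B] deltaCA [B;C] ∘ W [] DeA [B;C;B;C]
  ∘ W [A;B;C] muB [C] ∘ W [A;B;C] rhoBA [B;C] ∘ W [A;B] (bb B C) [A;B;C] ∘ W [A;B;B] deltaCA [B;C]
  ∘ W [A;B;B] deltaCB [C] ∘ W [A] DeB [C;C] ∘ W [A;B] DeC [].
Proof.
  transitivity (W [A;B;C] muA [B;C] ∘ W [A;B;C;A;A] muB [C] ∘ W [A;B;C;A;A] rhoBA [B;C] ∘ W [A;B;C;A] (bb B A) [A;B;C]
  ∘ W [A;B;C;A;B] DeA [B;C] ∘ W [A;B] (bb A C) [B;A;B;C] ∘ W [A;B;A] (bb B C) [A;B;C]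
  ∘ W [A;B;A;B] deltaCA [B;C] ∘ W [A;B;A;B] deltaCB [C] ∘ W [A;B;A;B] DeC []
  ∘ W [A;B] muA [B;C] ∘ W [A] (bb A B) [A;B;C] ∘ W [A;A] deltaBA [B;C] ∘ W [] DeA [B;B;C] ∘ W [A] DeB [C]).
  { lhs_only. rewrite ?cA. swp 0. swp 1. swp 2. swp 3. swp 4. swp 13. subst R. reflexivity. }
  apply comul_diag; assumption.
Qed.
End D.


Lemma tr_comul_c {K : bsmcat} {HK : is_bsmcat K} {X Y : Ob K} (e : X = Y) (d : Hom X (X ⊗ₒ X)) :
  tr_comul e d = cast (f_equal2 tens e e) ∘ d ∘ cast (eq_sym e).
Proof. destruct e. unfold tr_comul. rewrite !cast_refl, c1l, c1r. reflexivity. Qed.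
Lemma tr_unit_c {K : bsmcat} {HK : is_bsmcat K} {X Y : Ob K} (e : X = Y) (u : Hom tunit X) :
  tr_unit e u = cast e ∘ u.
Proof. destruct e. unfold tr_unit. rewrite !cast_refl, c1l. reflexivity. Qed.
Lemma tr_counit_c {K : bsmcat} {HK : is_bsmcat K} {X Y : Ob K} (e : X = Y) (c : Hom X tunit) :
  tr_counit e c = c ∘ cast (eq_sym e).
Proof. destruct e. unfold tr_counit. rewrite !cast_refl, c1r. reflexivity. Qed.
Lemma tr_mul_c {K : bsmcat} {HK : is_bsmcat K} {X Y : Ob K} (e : X = Y) (m : Hom (X ⊗ₒ X) X) :
  tr_mul e m = cast e ∘ m ∘ cast (f_equal2 tens (eq_sym e) (eq_sym e)).
Proof. destruct e. unfold tr_mul. rewrite !cast_refl, c1l, c1r. reflexivity. Qed.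

Ltac oeqd := cbn [den app]; rewrite ?tensA, ?tens1l, ?tens1r; reflexivity.
Notation "⟨ l1 ; l2 ⟩" := (@cast _ (den l1) (den l2) ltac:(oeqd)).

Section CW.
Context {K : bsmcat} {HK : is_bsmcat K}.
Lemma cp_mul_Wd (H X : Ob K) muH DeH muX rhoX Phi :
  cp_mul H X muH DeH muX rhoX Phi = ⟨ [H;X] ; [H ⊗ₒ X] ⟩ ∘
   (W [H] (muX : FM [X;X] [X]) [] ∘ W [] (muH : FM [H;H] [H]) [X;X] ∘ W [H;H] (rhoX : FM [X;H] [X]) [X]
    ∘ W [H] (Phi : FM [X;H] [H;X]) [H;X] ∘ W [H;X] (DeH : FM [H] [H;H]) [X]) ∘ ⟨ [H ⊗ₒ X; H ⊗ₒ X] ; [H;X;H;X] ⟩.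
Proof. rewrite cp_mul_W. cfin. Qed.
Lemma cp_comul_Wd (H X : Ob K) DeH muH DeX deltaX Phi :
  cp_comul H X DeH muH DeX deltaX Phi = ⟨ [H;X;H;X] ; [H ⊗ₒ X; H ⊗ₒ X] ⟩ ∘
   (W [H;X] (muH : FM [H;H] [H]) [X] ∘ W [H] (Phi : FM [H;X] [X;H]) [H;X] ∘ W [H;H] (deltaX : FM [X] [X;H]) [X]
    ∘ W [] (DeH : FM [H] [H;H]) [X;X] ∘ W [H] (DeX : FM [X] [X;X]) []) ∘ ⟨ [H ⊗ₒ X] ; [H;X] ⟩.
Proof. rewrite cp_comul_W. cfin. Qed.
Lemma tens_act_Wd (X Y H : Ob K) DeH rhoX rhoY Phi :
  tens_act X Y H DeH rhoX rhoY Phi = ⟨ [X;Y] ; [X ⊗ₒ Y] ⟩ ∘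
   (W [X] (rhoY : FM [Y;H] [Y]) [] ∘ W [] (rhoX : FM [X;H] [X]) [Y;H] ∘ W [X] (Phi : FM [Y;H] [H;Y]) [H]
    ∘ W [X;Y] (DeH : FM [H] [H;H]) []) ∘ ⟨ [X ⊗ₒ Y; H] ; [X;Y;H] ⟩.
Proof. rewrite tens_act_W. cfin. Qed.
Lemma tens_coact_Wd (X Y H : Ob K) muH dX dY Phi :
  tens_coact X Y H muH dX dY Phi = ⟨ [X;Y;H] ; [X ⊗ₒ Y; H] ⟩ ∘
   (W [X;Y] (muH : FM [H;H] [H]) [] ∘ W [X] (Phi : FM [H;Y] [Y;H]) [H] ∘ W [] (dX : FM [X] [X;H]) [Y;H]
    ∘ W [X] (dY : FM [Y] [Y;H]) []) ∘ ⟨ [X ⊗ₒ Y] ; [X;Y] ⟩.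
Proof. rewrite tens_coact_W. cfin. Qed.
Lemma yd_braid_Wd (X Y H : Ob K) rhoX dY Phi :
  yd_braid X Y H rhoX dY Phi = ⟨ [Y;X] ; [Y;X] ⟩ ∘
   (W [Y] (rhoX : FM [X;H] [X]) [] ∘ W [] (Phi : FM [X;Y] [Y;X]) [H] ∘ W [X] (dY : FM [Y] [Y;H]) []) ∘ ⟨ [X;Y] ; [X;Y] ⟩.
Proof. rewrite yd_braid_W. cnorm. reflexivity. Qed.
Lemma nested_act_Wd (X A B : Ob K) rA rB :
  nested_act X A B rA rB = ⟨ [X] ; [X] ⟩ ∘ ((rB : FM [X;B] [X]) ∘ W [] (rA : FM [X;A] [X]) [B]) ∘ ⟨ [X; A ⊗ₒ B] ; [X;A;B] ⟩.
Proof. rewrite nested_act_W. cnorm. reflexivity. Qed.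
Lemma nested_coact_Wd (X A B : Ob K) dA dB :
  nested_coact X A B dA dB = ⟨ [X;A;B] ; [X; A ⊗ₒ B] ⟩ ∘ (W [] (dA : FM [X] [X;A]) [B] ∘ (dB : FM [X] [X;B])) ∘ ⟨ [X] ; [X] ⟩.
Proof. rewrite nested_coact_W. cnorm. reflexivity. Qed.
Lemma braid_BrW (s t : list (Ob K)) x y (ex : x = den s) (ey : y = den t)
  (e1 : den [x;y] = den (s ++ t)) (e2 : den (t ++ s) = den [y;x]) :
  braid x y = @cast _ (den (t ++ s)) (den [y;x]) e2 ∘ Br s t ∘ @cast _ (den [x;y]) (den (s ++ t)) e1.
Proof. subst x y. unfold Br. cnorm. reflexivity. Qed.
End CW.

Ltac flat := repeat progress (rewrite ?Wf; rewrite <- ?Wc; rewrite ?Wcast; cbn [app];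
   repeat match goal with |- context [@W _ ?u _ _ (@W _ ?u' ?s ?t ?f ?v') ?v] =>
     let E := fresh in pose proof (@Wn _ _ u u' v' v s t f) as E; cbn [app] in E |- *; rewrite E; clear E end;
   unfold dc; cbn [app]).

Section V.
Context {K : bsmcat} {HK : is_bsmcat K} (A B C : Ob K)
  (muA : FM [A;A] [A]) (DeA : FM [A] [A;A])
  (rhoBA : FM [B;A] [B]) (deltaBA : FM [B] [B;A])
  (muB : FM [B;B] [B]) (DeB : FM [B] [B;B])
  (rhoCA : FM [C;A] [C]) (deltaCA : FM [C] [C;A])
  (rhoCB : FM [C;B] [C]) (deltaCB : FM [C] [C;B])
  (muC : FM [C;C] [C]) (DeC : FM [C] [C;C]).

Lemma E6 : (A ⊗ₒ (B ⊗ₒ C)) ⊗ₒ (A ⊗ₒ (B ⊗ₒ C)) = den [A;B;C;A;B;C].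
Proof. cbn [den]. rewrite ?tensA. reflexivity. Qed.

Lemma mul_convL :
  tr_mul (eq_sym (tensA A B C)) (cp_mul (A ⊗ₒ B) C (cp_mul A B muA DeA muB rhoBA (braid B A))
     (cp_comul A B DeA muA DeB deltaBA (braid A B)) muC (nested_act C A B rhoCA rhoCB) (braid C (A ⊗ₒ B)))
  = (W [A;B] muC [] ∘ W [A] muB [C;C] ∘ W [] muA [B;B;C;C] ∘ W [A;A] rhoBA [B;C;C] ∘ W [A] (bb B A) [A;B;C;C] ∘ W [A;B] DeA [B;C;C] ∘ W [A;B;A;B] rhoCB [C] ∘ W [A;B;A;B] rhoCA [B;C] ∘ W [A;B;A] (bb C B) [A;B;C] ∘ W [A;B] (bb C A) [B;A;B;C] ∘ W [A;B;C;A;B] muA [B;C] ∘ W [A;B;C;A] (bb A B) [A;B;C] ∘ W [A;B;C;A;A] deltaBA [B;C] ∘ W [A;B;C] DeA [B;B;C] ∘ W [A;B;C;A] DeB [C]) ∘ cast E6.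
Proof.
  lhs_only.
  rewrite tr_mul_c, (cp_mul_Wd (A ⊗ₒ B) C), (cp_mul_Wd A B), (cp_comul_Wd A B), nested_act_Wd.
  rewrite (braid_BrW [C] [A;B] C (A ⊗ₒ B) eq_refl eq_refl ltac:(oeqd) ltac:(oeqd)).
  pose proof (Hex1 [C] [A] [B]) as h. cbn [app] in h. rewrite h. clear h. unfold dc. rewrite ?Br11'.
  rewrite (Wreg [A ⊗ₒ B] [A;B] [] [] _ eq_refl eq_refl).
  rewrite (Wreg [A ⊗ₒ B; A ⊗ₒ B] [A;B;A;B] [C] [C] _ ltac:(oeqd) eq_refl).
  rewrite (Wreg [A ⊗ₒ B] [A;B] [A ⊗ₒ B; C] [A;B;C] _ eq_refl ltac:(oeqd)).
  rewrite (Wreg [A ⊗ₒ B; C] [A;B;C] [C] [C] _ ltac:(oeqd) eq_refl).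
  flat. cnorm. subst R. rewrite ?cA. unfold bb. cfin.
Qed.
Lemma mul_convR :
  cp_mul A (B ⊗ₒ C) muA DeA (cp_mul B C muB DeB muC rhoCB (yd_braid C B A rhoCA deltaBA (braid C B)))
    (tens_act B C A DeA rhoBA rhoCA (braid C A)) (braid (B ⊗ₒ C) A)
  = (W [A;B] muC [] ∘ W [A] muB [C;C] ∘ W [A;B;B] rhoCB [C] ∘ W [A;B;B] rhoCA [B;C] ∘ W [A;B] (bb C B) [A;B;C] ∘ W [A;B;C] deltaBA [B;C] ∘ W [A;B;C] DeB [C] ∘ W [] muA [B;C;B;C] ∘ W [A;A;B] rhoCA [B;C] ∘ W [A;A] rhoBA [C;A;B;C] ∘ W [A;A;B] (bb C A) [A;B;C] ∘ W [A;A;B;C] DeA [B;C] ∘ W [A] (bb B A) [C;A;B;C] ∘ W [A;B] (bb C A) [A;B;C] ∘ W [A;B;C] DeA [B;C]) ∘ cast E6.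
Proof.
  lhs_only.
  rewrite (cp_mul_Wd A (B ⊗ₒ C)), (cp_mul_Wd B C), yd_braid_Wd, tens_act_Wd.
  rewrite (braid_BrW [B;C] [A] (B ⊗ₒ C) A eq_refl eq_refl ltac:(oeqd) ltac:(oeqd)).
  pose proof (Hex2 [B] [C] [A]) as h. cbn [app] in h. rewrite h. clear h. unfold dc. rewrite ?Br11'.
  rewrite (Wreg [] [] [B ⊗ₒ C; B ⊗ₒ C] [B;C;B;C] _ eq_refl ltac:(oeqd)).
  rewrite (Wreg [A;A] [A;A] [B ⊗ₒ C] [B;C] _ eq_refl eq_refl).
  rewrite (Wreg [A] [A] [A; B ⊗ₒ C] [A;B;C] _ eq_refl eq_refl).
  rewrite (Wreg [A; B ⊗ₒ C] [A;B;C] [B ⊗ₒ C] [B;C] _ ltac:(oeqd) eq_refl).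
  flat. cnorm. subst R. unfold bb. cfin.
Qed.
Lemma comul_convL :
  tr_comul (eq_sym (tensA A B C)) (cp_comul (A ⊗ₒ B) C (cp_comul A B DeA muA DeB deltaBA (braid A B))
     (cp_mul A B muA DeA muB rhoBA (braid B A)) DeC (nested_coact C A B deltaCA deltaCB) (braid (A ⊗ₒ B) C))
  = cast (eq_sym E6) ∘ (W [A;B;C;A] muB [C] ∘ W [A;B;C] muA [B;B;C] ∘ W [A;B;C;A;A] rhoBA [B;C] ∘ W [A;B;C;A] (bb B A) [A;B;C] ∘ W [A;B;C;A;B] DeA [B;C] ∘ W [A;B] (bb A C) [B;A;B;C] ∘ W [A;B;A] (bb B C) [A;B;C] ∘ W [A;B;A;B] deltaCA [B;C] ∘ W [A;B;A;B] deltaCB [C] ∘ W [A;B] muA [B;C;C] ∘ W [A] (bb A B) [A;B;C;C] ∘ W [A;A] deltaBA [B;C;C] ∘ W [] DeA [B;B;C;C] ∘ W [A] DeB [C;C] ∘ W [A;B] DeC []).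
Proof.
  lhs_only.
  rewrite tr_comul_c, (cp_comul_Wd (A ⊗ₒ B) C), (cp_mul_Wd A B), (cp_comul_Wd A B), nested_coact_Wd.
  rewrite (braid_BrW [A;B] [C] (A ⊗ₒ B) C eq_refl eq_refl ltac:(oeqd) ltac:(oeqd)).
  pose proof (Hex2 [A] [B] [C]) as h. cbn [app] in h. rewrite h. clear h. unfold dc. rewrite ?Br11'.
  rewrite (Wreg [A ⊗ₒ B; C] [A;B;C] [C] [C] _ ltac:(oeqd) eq_refl).
  rewrite (Wreg [A ⊗ₒ B] [A;B] [A ⊗ₒ B; C] [A;B;C] _ eq_refl ltac:(oeqd)).
  rewrite (Wreg [A ⊗ₒ B; A ⊗ₒ B] [A;B;A;B] [C] [C] _ ltac:(oeqd) eq_refl).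
  rewrite (Wreg [A ⊗ₒ B] [A;B] [] [] _ eq_refl eq_refl).
  flat. cnorm. subst R. rewrite ?cA. unfold bb. cfin.
Qed.
Lemma comul_convR :
  cp_comul A (B ⊗ₒ C) DeA muA (cp_comul B C DeB muB DeC deltaCB (yd_braid B C A rhoBA deltaCA (braid B C)))
    (tens_coact B C A muA deltaBA deltaCA (braid A C)) (braid A (B ⊗ₒ C))
  = cast (eq_sym E6) ∘ (W [A;B;C] muA [B;C] ∘ W [A;B] (bb A C) [A;B;C] ∘ W [A] (bb A B) [C;A;B;C] ∘ W [A;A;B;C] muA [B;C] ∘ W [A;A;B] (bb A C) [A;B;C] ∘ W [A;A] deltaBA [C;A;B;C] ∘ W [A;A;B] deltaCA [B;C] ∘ W [] DeA [B;C;B;C] ∘ W [A;B;C] muB [C] ∘ W [A;B;C] rhoBA [B;C] ∘ W [A;B] (bb B C) [A;B;C] ∘ W [A;B;B] deltaCA [B;C] ∘ W [A;B;B] deltaCB [C] ∘ W [A] DeB [C;C] ∘ W [A;B] DeC []).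
Proof.
  lhs_only.
  rewrite (cp_comul_Wd A (B ⊗ₒ C)), (cp_comul_Wd B C), yd_braid_Wd, tens_coact_Wd.
  rewrite (braid_BrW [A] [B;C] A (B ⊗ₒ C) eq_refl eq_refl ltac:(oeqd) ltac:(oeqd)).
  pose proof (Hex1 [A] [B] [C]) as h. cbn [app] in h. rewrite h. clear h. unfold dc. rewrite ?Br11'.
  rewrite (Wreg [A; B ⊗ₒ C] [A;B;C] [B ⊗ₒ C] [B;C] _ ltac:(oeqd) eq_refl).
  rewrite (Wreg [A] [A] [A; B ⊗ₒ C] [A;B;C] _ eq_refl eq_refl).
  rewrite (Wreg [A;A] [A;A] [B ⊗ₒ C] [B;C] _ eq_refl eq_refl).
  rewrite (Wreg [] [] [B ⊗ₒ C; B ⊗ₒ C] [B;C;B;C] _ eq_refl ltac:(oeqd)).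
  flat. cnorm. subst R. rewrite ?cA. unfold bb. cfin.
Qed.
End V.
Section U.
Context {K : bsmcat} {HK : is_bsmcat K} (A B C : Ob K) (etaA : Hom tunit A) (etaB : Hom tunit B) (etaC : Hom tunit C)
  (epA : Hom A tunit) (epB : Hom B tunit) (epC : Hom C tunit).
Lemma unit_conv : tr_unit (eq_sym (tensA A B C)) (cp_unit (A ⊗ₒ B) C (cp_unit A B etaA etaB) etaC)
  = cp_unit A (B ⊗ₒ C) etaA (cp_unit B C etaB etaC).
Proof. rewrite tr_unit_c. unfold cp_unit. nf. cfin. Qed.
Lemma counit_conv : tr_counit (eq_sym (tensA A B C)) (cp_counit (A ⊗ₒ B) C (cp_counit A B epA epB) epC)
  = cp_counit A (B ⊗ₒ C) epA (cp_counit B C epB epC).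
Proof. rewrite tr_counit_c. unfold cp_counit. rewrite (split_tm (cast (tens1l tunit) ∘ (epA ⊗ epB)) epC). nf. cfin. Qed.
End U.


Section Ax.
Context {K : bsmcat} {HK : is_bsmcat K}.
Lemma rmod_W (X H : Ob K) muH etaH rho : is_rmod X H muH etaH rho ->
  (rho : FM [X;H] [X]) ∘ W [X] (muH : FM [H;H] [H]) [] = rho ∘ W [] (rho : FM [X;H] [X]) [H].
Proof. intros [Hm _]. nf. rewrite <- Hm. cfin. Qed.
Lemma rcomod_W (X H : Ob K) DeH epH delta : is_rcomod X H DeH epH delta ->
  W [X] (DeH : FM [H] [H;H]) [] ∘ (delta : FM [X] [X;H]) = W [] (delta : FM [X] [X;H]) [H] ∘ delta.
Proof. intros [Hm _]. nf. rewrite <- Hm. cnorm. cfin. Qed.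
Lemma assoc_W (X : Ob K) Phi mu eta De ep S : bgroup X Phi mu eta De ep S ->
  (mu : FM [X;X] [X]) ∘ W [] (mu : FM [X;X] [X]) [X] = mu ∘ W [X] (mu : FM [X;X] [X]) [].
Proof. intros [Hm _]. nf. rewrite <- Hm. cfin. Qed.
Lemma coassoc_W (X : Ob K) Phi mu eta De ep S : bgroup X Phi mu eta De ep S ->
  W [X] (De : FM [X] [X;X]) [] ∘ De = W [] (De : FM [X] [X;X]) [X] ∘ De.
Proof. intros (_ & _ & _ & Hm & _). nf. rewrite <- Hm. cnorm. cfin. Qed.
End Ax.



Theorem mainTheorem14 (K : bsmcat) (HK : is_bsmcat K) (A B C : Ob K)
  (* A : a braided group in K *)
  (muA : Hom (A ⊗ₒ A) A) (etaA : Hom tunit A) (DeA : Hom A (A ⊗ₒ A))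
  (epA : Hom A tunit) (SA : Hom A A)
  (hA : bgroup A (braid A A) muA etaA DeA epA SA)
  (* B : a braided group in YD(K)^A_A *)
  (rhoBA : Hom (B ⊗ₒ A) B) (deltaBA : Hom B (B ⊗ₒ A))
  (muB : Hom (B ⊗ₒ B) B) (etaB : Hom tunit B) (DeB : Hom B (B ⊗ₒ B))
  (epB : Hom B tunit) (SB : Hom B B)
  (hB : is_bg_yd B A muA etaA DeA epA (braid A B) (braid B A) (braid A A) (braid B B)
          rhoBA deltaBA muB etaB DeB epB SB)
  (* C : an object of YD(YD(K)^A_A)^B_B ... *)
  (rhoCA : Hom (C ⊗ₒ A) C) (deltaCA : Hom C (C ⊗ₒ A))
  (rhoCB : Hom (C ⊗ₒ B) C) (deltaCB : Hom C (C ⊗ₒ B))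
  (hCA : is_yd C A muA etaA DeA epA (braid A C) (braid C A) (braid A A) rhoCA deltaCA)
  (hCB : is_yd_D A B C muA DeA rhoBA deltaBA muB etaB DeB epB
           rhoCA deltaCA rhoCB deltaCB)
  (* ... which, identified with an object of YD(K)^{A⋊B}_{A⋊B}, is a braided
     group there *)
  (muC : Hom (C ⊗ₒ C) C) (etaC : Hom tunit C) (DeC : Hom C (C ⊗ₒ C))
  (epC : Hom C tunit) (SC : Hom C C)
  (hC : is_bg_yd C (A ⊗ₒ B)
          (cp_mul A B muA DeA muB rhoBA (braid B A))
          (cp_unit A B etaA etaB)
          (cp_comul A B DeA muA DeB deltaBA (braid A B))
          (cp_counit A B epA epB)
          (braid (A ⊗ₒ B) C) (braid C (A ⊗ₒ B)) (braid (A ⊗ₒ B) (A ⊗ₒ B)) (braid C C)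
          (nested_act C A B rhoCA rhoCB) (nested_coact C A B deltaCA deltaCB)
          muC etaC DeC epC SC) :
  (* (A ⋊ B) ⋊ C and A ⋊ (B ⋊ C) coincide on (A⊗B)⊗C = A⊗(B⊗C) *)
  let e := eq_sym (tensA A B C) in
  (* A ⋊ B, in K *)
  let muAB := cp_mul A B muA DeA muB rhoBA (braid B A) in
  let etaAB := cp_unit A B etaA etaB in
  let DeAB := cp_comul A B DeA muA DeB deltaBA (braid A B) in
  let epAB := cp_counit A B epA epB in
  (* B ⋊ C, formed in D = YD(K)^A_A (braiding of D = crossed-module braiding) *)
  let muBC := cp_mul B C muB DeB muC rhoCB (yd_braid C B A rhoCA deltaBA (braid C B)) in
  let etaBC := cp_unit B C etaB etaC in
  let DeBC := cp_comul B C DeB muB DeC deltaCB (yd_braid B C A rhoBA deltaCA (braid B C)) in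
  let epBC := cp_counit B C epB epC in
  (* A-crossed-module structure of B ⋊ C = tensor product in D *)
  let rhoBC := tens_act B C A DeA rhoBA rhoCA (braid C A) in
  let deltaBC := tens_coact B C A muA deltaBA deltaCA (braid A C) in
  tr_mul e (cp_mul (A ⊗ₒ B) C muAB DeAB muC (nested_act C A B rhoCA rhoCB) (braid C (A ⊗ₒ B)))
    = cp_mul A (B ⊗ₒ C) muA DeA muBC rhoBC (braid (B ⊗ₒ C) A) /\
  tr_unit e (cp_unit (A ⊗ₒ B) C etaAB etaC) = cp_unit A (B ⊗ₒ C) etaA etaBC /\
  tr_comul e (cp_comul (A ⊗ₒ B) C DeAB muAB DeC (nested_coact C A B deltaCA deltaCB)
                (braid (A ⊗ₒ B) C))
    = cp_comul A (B ⊗ₒ C) DeA muA DeBC deltaBC (braid A (B ⊗ₒ C)) /\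
  tr_counit e (cp_counit (A ⊗ₒ B) C epAB epC) = cp_counit A (B ⊗ₒ C) epA epBC.
Proof.
  cbv zeta.
  destruct hCA as [HrCA [HcCA _]].
  pose proof (rmod_W C A muA etaA rhoCA HrCA) as modCA.
  pose proof (rcomod_W C A DeA epA deltaCA HcCA) as comodCA.
  pose proof (assoc_W A _ _ _ _ _ _ hA) as assocA.
  pose proof (coassoc_W A _ _ _ _ _ _ hA) as coassA.
  split; [|split; [|split]].
  - etransitivity; [apply mul_convL|]. etransitivity; [|symmetry; apply mul_convR].
    f_equal. apply mul_diag2; assumption.
  - apply unit_conv.
  - etransitivity; [apply comul_convL|]. etransitivity; [|symmetry; apply comul_convR].
    f_equal. apply comul_diag2; assumption.
  - apply counit_conv.
Qed.
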